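(* Let $T$ be a triangle of type $(108^\circ,36^\circ,36^\circ)$ or $(72^\circ,72^\circ,36^\circ)$. Then $h(n,T)\le\frac{n^3}{25}$ for every positive integer $n$.
   Context: A triangle is of type $(\alpha,\beta,\gamma)$ if $\alpha\ge\beta\ge\gamma$ are its interior angles in degrees. For a triangle $T$ with side lengths $a,b,c$ and $\varepsilon>0$, with $\varepsilon'=\varepsilon\min\{a,b,c\}$, a triangle $A'B'C'$ is $\varepsilon$-congruent to $T$ if there are $A,B,C\in\mathbb{R}^2$ with $ABC$ congruent to $T$ and $A',B',C'$ within distance $\varepsilon'$ of $A,B,C$ respectively. $h(n,T,\varepsilon)$ is the maximum over $n$-point sets $P\subseteq\mathbb{R}^2$ of the number of 3-subsets of $P$ forming triangles $\varepsilon$-congruent to $T$, and $h(n,T)=\min_{\varepsilon>0}h(n,T,\varepsilon)$. *)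

(* Defs.v *)
From Stdlib Require Import Reals Lra List Permutation ClassicalEpsilon.
Import ListNotations.
Open Scope R_scope.

Definition point : Type := (R * R)%type.

Definition dist (p q : point) : R :=
  sqrt ((fst p - fst q) ^ 2 + (snd p - snd q) ^ 2).

Definition angle_at (v p q : point) : R :=
  acos (((fst p - fst v) * (fst q - fst v) + (snd p - snd v) * (snd q - snd v))
        / (dist v p * dist v q)).

Definition deg (x : R) : R := x * PI / 180.

(* A triangle T, given by its vertices (T1,T2,T3), is of type (a,b,c)
   (a >= b >= c in degrees) if its vertices are pairwise distinct and its
   interior angles, in some order of the vertices, are a, b, c. *)
Definition tri_type (T : point * point * point) (a b c : R) : Prop :=
  let '(X, Y, Z) := T in
  X <> Y /\ Y <> Z /\ X <> Z /\
  exists A B C : point,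
    Permutation [A; B; C] [X; Y; Z] /\
    angle_at A B C = deg a /\ angle_at B A C = deg b /\ angle_at C A B = deg c.

Definition congruent (A B C : point) (T : point * point * point) : Prop :=
  let '(X, Y, Z) := T in
  dist A B = dist X Y /\ dist B C = dist Y Z /\ dist A C = dist X Z.

Definition min_side (T : point * point * point) : R :=
  let '(X, Y, Z) := T in Rmin (dist X Y) (Rmin (dist Y Z) (dist X Z)).

Definition eps_congruent (eps : R) (T : point * point * point)
    (A' B' C' : point) : Prop :=
  exists A B C : point, congruent A B C T /\
    dist A' A <= eps * min_side T /\ dist B' B <= eps * min_side T /\
    dist C' C <= eps * min_side T.

Definition good3 (eps : R) (T : point * point * point) (p q r : point) : Prop :=
  exists A' B' C' : point, Permutation [A'; B'; C'] [p; q; r] /\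
    eps_congruent eps T A' B' C'.

(* all 3-subsets of a duplicate-free list, as triples of positions i<j<k *)
Fixpoint pairs_of {A : Type} (l : list A) : list (A * A) :=
  match l with
  | [] => []
  | x :: t => map (fun y => (x, y)) t ++ pairs_of t
  end.

Fixpoint triples_of {A : Type} (l : list A) : list (A * A * A) :=
  match l with
  | [] => []
  | x :: t => map (fun yz => (x, fst yz, snd yz)) (pairs_of t) ++ triples_of t
  end.

Definition Pdec (P : Prop) : bool :=
  if excluded_middle_informative P then true else false.

Definition count_good (eps : R) (T : point * point * point) (P : list point) : nat :=
  length (filter (fun t => let '(p, q, r) := t in Pdec (good3 eps T p q r))
                 (triples_of P)).

Definition h_eps_le (n : nat) (T : point * point * point) (eps k : R) : Prop :=
  forall P : list point, NoDup P -> length P = n -> INR (count_good eps T P) <= k.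

(* h(n,T) = min_{eps>0} h(n,T,eps) <= k *)
Definition h_le (n : nat) (T : point * point * point) (k : R) : Prop :=
  exists eps : R, 0 < eps /\ h_eps_le n T eps k.

(* Main.v *)
Require Import Defs.
From Stdlib Require Import Reals Lra Psatz List Permutation ClassicalEpsilon Classical Arith Wf_nat.
Import ListNotations.
Require Import Defs.
Open Scope R_scope.


Lemma dist_sym p q : dist p q = dist q p.
Proof. unfold dist. f_equal. ring. Qed.

Lemma dist_nonneg p q : 0 <= dist p q.
Proof. unfold dist. apply sqrt_pos. Qed.

Lemma dist_sq p q : dist p q * dist p q = (fst p - fst q) ^ 2 + (snd p - snd q) ^ 2.
Proof. unfold dist. apply sqrt_sqrt. apply Rplus_le_le_0_compat; apply pow2_ge_0. Qed.

Lemma dist_triangle p q r : dist p r <= dist p q + dist q r.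
Proof.
  assert (H1 := dist_sq p q). assert (H2 := dist_sq q r). assert (H3 := dist_sq p r).
  assert (Hc := sqrt_cauchy (fst p - fst q) (snd p - snd q) (fst q - fst r) (snd q - snd r)).
  unfold Rsqr in Hc.
  replace (sqrt ((fst p - fst q) * (fst p - fst q) + (snd p - snd q) * (snd p - snd q)))
    with (dist p q) in Hc by (unfold dist; f_equal; ring).
  replace (sqrt ((fst q - fst r) * (fst q - fst r) + (snd q - snd r) * (snd q - snd r)))
    with (dist q r) in Hc by (unfold dist; f_equal; ring).
  assert (0 <= dist p q) by apply dist_nonneg.
  assert (0 <= dist q r) by apply dist_nonneg.
  assert (0 <= dist p r) by apply dist_nonneg.
  apply Rsqr_incr_0_var; unfold Rsqr; [|lra].
  rewrite H3.
  set (a := fst p - fst q) in *. set (b := snd p - snd q) in *.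
  set (c := fst q - fst r) in *. set (d := snd q - snd r) in *.
  replace (fst p - fst r) with (a + c) by (unfold a, c; ring).
  replace (snd p - snd r) with (b + d) by (unfold b, d; ring).
  nra.
Qed.

Lemma dist_eq0 p q : dist p q = 0 -> p = q.
Proof.
  intro H. assert (H1 := dist_sq p q). rewrite H in H1.
  destruct p as [a b]; destruct q as [c d]; simpl in *.
  assert (E1 : (a - c) ^ 2 = 0) by (assert (0 <= (a-c)^2) by apply pow2_ge_0; assert (0 <= (b-d)^2) by apply pow2_ge_0; lra).
  assert (E2 : (b - d) ^ 2 = 0) by (assert (0 <= (a-c)^2) by apply pow2_ge_0; assert (0 <= (b-d)^2) by apply pow2_ge_0; lra).
  assert (a - c = 0) by (destruct (Req_dec (a-c) 0) as [h|h]; [exact h| exfalso; exact (pow_nonzero _ 2 h E1)]).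
  assert (b - d = 0) by (destruct (Req_dec (b-d) 0) as [h|h]; [exact h| exfalso; exact (pow_nonzero _ 2 h E2)]).
  f_equal; lra.
Qed.

(* golden ratio *)
Definition rg : R := 2 * cos (PI / 5).

Lemma cos_pi5_eq : 4 * cos (PI/5) ^ 2 - 2 * cos (PI/5) - 1 = 0 /\ 0 < cos (PI/5).
Proof.
  set (x := PI/5).
  assert (Hp := PI_RGT_0).
  assert (Hc : 0 < cos x).
  { apply cos_gt_0; unfold x; lra. }
  assert (H3 : cos (2*x + x) = - cos (2*x)).
  { replace (2*x+x) with (PI - 2*x) by (unfold x; field). apply Rtrigo_facts.cos_pi_minus. }
  rewrite cos_plus, cos_2a_cos, sin_2a in H3.
  assert (Hs := sin2_cos2 x). unfold Rsqr in Hs.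
  split; [|exact Hc].
  assert (E : (cos x + 1) * (4 * cos x ^ 2 - 2 * cos x - 1) = 0) by nra.
  apply Rmult_integral in E. destruct E as [E|E]; [lra|exact E].
Qed.

Lemma rg_eq : rg * rg = rg + 1.
Proof. unfold rg. destruct cos_pi5_eq. nra. Qed.

Lemma rg_bounds : 1.618 < rg < 1.6181.
Proof. assert (H := rg_eq). assert (0 < rg) by (unfold rg; destruct cos_pi5_eq; lra). split; nra. Qed.

Lemma deg36 : deg 36 = PI/5. Proof. unfold deg. field. Qed.
Lemma deg72 : deg 72 = 2 * (PI/5). Proof. unfold deg. field. Qed.

Lemma cos36 : cos (deg 36) = rg / 2.
Proof. rewrite deg36. unfold rg. field. Qed.
Lemma cos72 : cos (deg 72) = (rg - 1) / 2.
Proof. rewrite deg72, cos_2a_cos. assert (H := rg_eq). unfold rg in *. nra. Qed.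


Lemma dist_pos p q : p <> q -> 0 < dist p q.
Proof.
  intro H. destruct (dist_nonneg p q) as [h|h]; [exact h|].
  exfalso. apply H. apply dist_eq0. auto.
Qed.

Lemma cos_angle v p q : v <> p -> v <> q ->
  cos (angle_at v p q) * (dist v p * dist v q) =
  (fst p - fst v) * (fst q - fst v) + (snd p - snd v) * (snd q - snd v).
Proof.
  intros H1 H2.
  assert (P1 := dist_pos _ _ H1). assert (P2 := dist_pos _ _ H2).
  set (dot := (fst p - fst v) * (fst q - fst v) + (snd p - snd v) * (snd q - snd v)).
  assert (Ed1 : dist v p = sqrt (Rsqr (fst p - fst v) + Rsqr (snd p - snd v)))
    by (unfold dist, Rsqr; f_equal; ring).
  assert (Ed2 : dist v q = sqrt (Rsqr (fst q - fst v) + Rsqr (snd q - snd v)))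
    by (unfold dist, Rsqr; f_equal; ring).
  assert (C1 : dot <= dist v p * dist v q).
  { rewrite Ed1, Ed2. apply sqrt_cauchy. }
  assert (C2 : - dot <= dist v p * dist v q).
  { rewrite Ed1, Ed2.
    replace (Rsqr (fst p - fst v)) with (Rsqr (- (fst p - fst v))) by (unfold Rsqr; ring).
    replace (Rsqr (snd p - snd v)) with (Rsqr (- (snd p - snd v))) by (unfold Rsqr; ring).
    replace (- dot) with ((- (fst p - fst v)) * (fst q - fst v) + (- (snd p - snd v)) * (snd q - snd v)) by (unfold dot; ring).
    apply sqrt_cauchy. }
  assert (PD : 0 < dist v p * dist v q) by nra.
  unfold angle_at. fold dot.
  rewrite cos_acos.
  - field. lra.
  - split.
    + apply (Rmult_le_reg_r (dist v p * dist v q)); auto.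
      unfold Rdiv. rewrite Rmult_assoc, Rinv_l by lra. lra.
    + apply (Rmult_le_reg_r (dist v p * dist v q)); auto.
      unfold Rdiv. rewrite Rmult_assoc, Rinv_l by lra. lra.
Qed.

Lemma law_cos v p q k : v <> p -> v <> q -> angle_at v p q = deg k ->
  2 * cos (deg k) * (dist v p * dist v q) =
  dist v p * dist v p + dist v q * dist v q - dist p q * dist p q.
Proof.
  intros H1 H2 H. rewrite <- H. rewrite Rmult_assoc, cos_angle by auto.
  rewrite !dist_sq. ring.
Qed.

Definition SidesOK (leg base : R) (X Y Z : point) : Prop :=
  (dist X Y = leg /\ dist Y Z = leg /\ dist X Z = base) \/
  (dist X Y = leg /\ dist Y Z = base /\ dist X Z = leg) \/
  (dist X Y = base /\ dist Y Z = leg /\ dist X Z = leg).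

Lemma perm3 {A : Type} (x y z p q r : A) : Permutation [x; y; z] [p; q; r] ->
  (x = p /\ y = q /\ z = r) \/ (x = p /\ y = r /\ z = q) \/
  (x = q /\ y = p /\ z = r) \/ (x = q /\ y = r /\ z = p) \/
  (x = r /\ y = p /\ z = q) \/ (x = r /\ y = q /\ z = p).
Proof.
  intro H.
  assert (Hx : In x [p; q; r]) by (apply (Permutation_in x H); simpl; auto).
  simpl in Hx. destruct Hx as [E|[E|[E|[]]]]; subst.
  - apply Permutation_cons_inv in H. apply Permutation_length_2 in H.
    destruct H as [[-> ->]|[-> ->]]; tauto.
  - assert (H' : Permutation (x :: [y; z]) (x :: [p; r])).
    { eapply perm_trans; [exact H| constructor]. }
    apply Permutation_cons_inv in H'. apply Permutation_length_2 in H'.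
    destruct H' as [[-> ->]|[-> ->]]; tauto.
  - assert (H' : Permutation (x :: [y; z]) (x :: [p; q])).
    { eapply perm_trans; [exact H|]. 
      apply Permutation_sym. 
      change (Permutation ([x] ++ [p; q]) ([p; q] ++ [x])). apply Permutation_app_comm. }
    apply Permutation_cons_inv in H'. apply Permutation_length_2 in H'.
    destruct H' as [[-> ->]|[-> ->]]; tauto.
Qed.

Lemma SidesOK_perm leg base A B C X Y Z : Permutation [A; B; C] [X; Y; Z] ->
  SidesOK leg base A B C -> SidesOK leg base X Y Z.
Proof.
  intros HP HS. unfold SidesOK in *.
  apply perm3 in HP.
  destruct HP as [[-> [-> ->]]|[[-> [-> ->]]|[[-> [-> ->]]|[[-> [-> ->]]|[[-> [-> ->]]|[-> [-> ->]]]]]]];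
  rewrite ?(dist_sym Y X), ?(dist_sym Z Y), ?(dist_sym Z X) in *; tauto.
Qed.


Lemma nodup3 {T : Type} (x y z : T) : NoDup [x; y; z] -> x <> y /\ y <> z /\ x <> z.
Proof.
  intro H. inversion H as [|? ? H1 H2]; subst. inversion H2 as [|? ? H3 H4]; subst.
  simpl in *. repeat split; intro E; subst; tauto.
Qed.

Lemma nodup3_intro {T : Type} (x y z : T) : x <> y -> y <> z -> x <> z -> NoDup [x; y; z].
Proof.
  intros. constructor. simpl. intros [E|[E|[]]]; subst; tauto.
  constructor. simpl. intros [E|[]]; subst; tauto. constructor. simpl; tauto. constructor.
Qed.

Definition shape (leg base u : R) : Prop :=
  0 < u /\ ((leg = u /\ base = rg * u) \/ (leg = rg * u /\ base = u)).

Lemma min_side_shape leg base u X Y Z : shape leg base u -> SidesOK leg base X Y Z ->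
  min_side (X, Y, Z) = u.
Proof.
  intros [Hu Hs] HS. assert (Hr := rg_bounds). unfold min_side, SidesOK, Rmin in *.
  assert (0 < rg * u) by nra.
  destruct Hs as [[-> ->]|[-> ->]];
  destruct HS as [[-> [-> ->]]|[[-> [-> ->]]|[-> [-> ->]]]];
  repeat (destruct Rle_dec); nra.
Qed.

Lemma T_shape T : tri_type T 108 36 36 \/ tri_type T 72 72 36 ->
  exists leg base u, shape leg base u /\ min_side T = u /\
    (let '(X, Y, Z) := T in SidesOK leg base X Y Z).
Proof.
  destruct T as [[X Y] Z]. intro H.
  assert (Hr := rg_bounds). assert (Hrr := rg_eq).
  destruct H as [H|H]; unfold tri_type in H;
  destruct H as (HXY & HYZ & HXZ & A & B & C & HP & HA & HB & HC);
  assert (HN : NoDup [A; B; C]) by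
    (apply (Permutation_NoDup (Permutation_sym HP)); apply nodup3_intro; auto);
  apply nodup3 in HN; destruct HN as (HAB & HBC & HAC).
  -
    assert (E1 := law_cos B A C 36 (not_eq_sym HAB) HBC HB).
    assert (E2 := law_cos C A B 36 (not_eq_sym HAC) (not_eq_sym HBC) HC).
    rewrite cos36 in E1, E2.
    rewrite (dist_sym B A) in E1. rewrite (dist_sym C A), (dist_sym C B) in E2.
    set (p := dist A B) in *. set (q := dist A C) in *. set (x := dist B C) in *.
    assert (Pp : 0 < p) by (apply dist_pos; auto).
    assert (Pq : 0 < q) by (apply dist_pos; auto).
    assert (Px : 0 < x) by (apply dist_pos; auto).
    assert (F1 : (p - q) * (rg / 2 * x - (p + q)) = 0) by nra.
    assert (F2 : rg / 2 * (p + q) = x) by nra.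
    assert (Hpq : p = q).
    { apply Rmult_integral in F1. destruct F1 as [F1|F1]; [lra|].
      exfalso. assert (rg / 2 * (rg / 2) * (p + q) = p + q) by nra. nra. }
    assert (Hx : x = rg * p) by (rewrite <- F2, <- Hpq; field).
    exists p, x, p. split; [split; [auto| left; auto]|].
    assert (HS : SidesOK p x A B C) by (unfold SidesOK; fold p q x; right; left; repeat split; auto; lra).
    assert (HS' := SidesOK_perm _ _ _ _ _ _ _ _ HP HS).
    split; [|exact HS'].
    apply (min_side_shape p x p); auto. split; auto.
  -
    assert (E1 := law_cos A B C 72 HAB HAC HA).
    assert (E2 := law_cos B A C 72 (not_eq_sym HAB) HBC HB).
    rewrite cos72 in E1, E2.
    rewrite (dist_sym B A) in E2.
    set (p := dist A B) in *. set (q := dist A C) in *. set (x := dist B C) in *.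
    assert (Pp : 0 < p) by (apply dist_pos; auto).
    assert (Pq : 0 < q) by (apply dist_pos; auto).
    assert (Px : 0 < x) by (apply dist_pos; auto).
    assert (F1 : (q - x) * ((rg - 1) / 2 * p - (q + x)) = 0) by nra.
    assert (F2 : (rg - 1) / 2 * (q + x) = p) by nra.
    assert (Hqx : q = x).
    { apply Rmult_integral in F1. destruct F1 as [F1|F1]; [lra|].
      exfalso. assert ((rg - 1) / 2 * ((rg - 1) / 2) * (q + x) = q + x) by nra. nra. }
    assert (Hq : q = rg * p).
    { rewrite <- F2, <- Hqx. field_simplify. nra. }
    exists q, p, p. split; [split; [auto| right; auto]|].
    assert (HS : SidesOK q p A B C) by (unfold SidesOK; fold p q x; right; right; repeat split; auto; lra).
    assert (HS' := SidesOK_perm _ _ _ _ _ _ _ _ HP HS).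
    split; [|exact HS'].
    apply (min_side_shape q p p); auto. split; auto.
Qed.


Definition near (x t d : R) : Prop := t - d <= x <= t + d.

Definition aSSL (leg base d : R) (p q r : point) : Prop :=
  (near (dist p q) leg d /\ near (dist p r) leg d /\ near (dist q r) base d) \/
  (near (dist q p) leg d /\ near (dist q r) leg d /\ near (dist p r) base d) \/
  (near (dist r p) leg d /\ near (dist r q) leg d /\ near (dist p q) base d).

Lemma aSSL_swap12 leg base d p q r : aSSL leg base d p q r <-> aSSL leg base d q p r.
Proof. unfold aSSL. rewrite (dist_sym q p), (dist_sym r p), (dist_sym r q). tauto. Qed.

Lemma aSSL_swap23 leg base d p q r : aSSL leg base d p q r <-> aSSL leg base d p r q.
Proof. unfold aSSL. rewrite (dist_sym q p), (dist_sym r p), (dist_sym r q). tauto. Qed.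

Lemma aSSL_perm leg base d A B C p q r : Permutation [A; B; C] [p; q; r] ->
  aSSL leg base d A B C -> aSSL leg base d p q r.
Proof.
  intros HP H. apply perm3 in HP.
  destruct HP as [[-> [-> ->]]|[[-> [-> ->]]|[[-> [-> ->]]|[[-> [-> ->]]|[[-> [-> ->]]|[-> [-> ->]]]]]]].
  - exact H.
  - apply aSSL_swap23; exact H.
  - apply aSSL_swap12; exact H.
  - apply aSSL_swap12, aSSL_swap23; exact H.
  - apply aSSL_swap23, aSSL_swap12; exact H.
  - apply aSSL_swap23, aSSL_swap12, aSSL_swap23; exact H.
Qed.

Lemma near_move A B A' B' e : dist A' A <= e -> dist B' B <= e ->
  near (dist A' B') (dist A B) (2 * e).
Proof.
  intros H1 H2. unfold near.
  assert (T1 := dist_triangle A' A B'). assert (T2 := dist_triangle A B B').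
  assert (T3 := dist_triangle A A' B). assert (T4 := dist_triangle A' B' B).
  rewrite (dist_sym B B') in T2. rewrite (dist_sym A A') in T3.
  split; lra.
Qed.

Lemma good3_aSSL eps T leg base u p q r :
  shape leg base u -> min_side T = u ->
  (let '(X, Y, Z) := T in SidesOK leg base X Y Z) ->
  good3 eps T p q r -> aSSL leg base (2 * (eps * u)) p q r.
Proof.
  destruct T as [[X Y] Z]. intros Hsh Hm HS [A' [B' [C' [HP [A [B [C [Hc [H1 [H2 H3]]]]]]]]]].
  rewrite Hm in H1, H2, H3.
  apply (aSSL_perm _ _ _ A' B' C'); auto.
  assert (N1 := near_move _ _ _ _ _ H1 H2).
  assert (N2 := near_move _ _ _ _ _ H2 H3).
  assert (N3 := near_move _ _ _ _ _ H1 H3).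
  unfold congruent in Hc. destruct Hc as (E1 & E2 & E3).
  rewrite E1 in N1. rewrite E2 in N2. rewrite E3 in N3.
  unfold aSSL. rewrite (dist_sym B' A'), (dist_sym C' A'), (dist_sym C' B').
  unfold SidesOK in HS.
  destruct HS as [(F1 & F2 & F3)|[(F1 & F2 & F3)|(F1 & F2 & F3)]];
  rewrite F1 in N1; rewrite F2 in N2; rewrite F3 in N3; tauto.
Qed.


Definition det3 (g11 g22 g33 g12 g13 g23 : R) : R :=
  g11 * g22 * g33 + 2 * (g12 * g13 * g23) - g11 * g23 * g23 - g22 * g13 * g13 - g33 * g12 * g12.

Definition gram (a1 a2 a3 b12 b13 b23 : R) : R :=
  det3 a1 a2 a3 ((a1 + a2 - b12) / 2) ((a1 + a3 - b13) / 2) ((a2 + a3 - b23) / 2).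

Definition D2 (p q : point) : R := dist p q * dist p q.

Lemma gram_zero y x1 x2 x3 :
  gram (D2 y x1) (D2 y x2) (D2 y x3) (D2 x1 x2) (D2 x1 x3) (D2 x2 x3) = 0.
Proof.
  unfold D2. rewrite !dist_sq.
  destruct y as [a b]; destruct x1 as [c d]; destruct x2 as [e f]; destruct x3 as [g h].
  unfold gram, det3; simpl. field.
Qed.

Lemma gram_scale k a1 a2 a3 b12 b13 b23 : 0 < k ->
  gram (a1 / k) (a2 / k) (a3 / k) (b12 / k) (b13 / k) (b23 / k) =
  gram a1 a2 a3 b12 b13 b23 / (k * k * k).
Proof. intro. unfold gram, det3. field. lra. Qed.

Lemma Rabs_close x e : Rabs x <= e -> - e <= x <= e.
Proof. unfold Rabs. destruct (Rcase_abs x); intros; lra. Qed.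

Lemma abs3 a b c A B C : Rabs a <= A -> Rabs b <= B -> Rabs c <= C ->
  Rabs (a * b * c) <= A * B * C.
Proof.
  intros. rewrite !Rabs_mult.
  assert (h1 := Rabs_pos a). assert (h2 := Rabs_pos b). assert (h3 := Rabs_pos c).
  apply Rmult_le_compat; try apply Rmult_le_pos; auto.
  apply Rmult_le_compat; auto.
Qed.

Lemma prod3_close x1 x2 x3 y1 y2 y3 e M :
  0 <= e <= 1 -> 0 <= M ->
  Rabs (x1 - y1) <= e -> Rabs (x2 - y2) <= e -> Rabs (x3 - y3) <= e ->
  Rabs y1 <= M -> Rabs y2 <= M -> Rabs y3 <= M ->
  Rabs (x1 * x2 * x3 - y1 * y2 * y3) <= 3 * ((M + 1) * (M + 1)) * e.
Proof.
  intros He HM H1 H2 H3 K1 K2 K3.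
  assert (J2 : Rabs x2 <= M + 1).
  { replace x2 with ((x2 - y2) + y2) by ring. eapply Rle_trans; [apply Rabs_triang|]. lra. }
  assert (J3 : Rabs x3 <= M + 1).
  { replace x3 with ((x3 - y3) + y3) by ring. eapply Rle_trans; [apply Rabs_triang|]. lra. }
  replace (x1 * x2 * x3 - y1 * y2 * y3) with
    ((x1 - y1) * x2 * x3 + (y1 * (x2 - y2) * x3 + y1 * y2 * (x3 - y3))) by ring.
  eapply Rle_trans; [apply Rabs_triang|].
  eapply Rle_trans; [apply Rplus_le_compat_l; apply Rabs_triang|].
  assert (A1 := abs3 _ _ _ _ _ _ H1 J2 J3).
  assert (K1' : Rabs y1 <= M + 1) by lra. assert (K2' : Rabs y2 <= M + 1) by lra.
  assert (A2 := abs3 _ _ _ _ _ _ K1' H2 J3).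
  assert (A3 := abs3 _ _ _ _ _ _ K1' K2' H3).
  nra.
Qed.

Lemma det3_close g11 g22 g33 g12 g13 g23 h11 h22 h33 h12 h13 h23 e M :
  0 <= e <= 1 -> 0 <= M ->
  Rabs (g11 - h11) <= e -> Rabs (g22 - h22) <= e -> Rabs (g33 - h33) <= e ->
  Rabs (g12 - h12) <= e -> Rabs (g13 - h13) <= e -> Rabs (g23 - h23) <= e ->
  Rabs h11 <= M -> Rabs h22 <= M -> Rabs h33 <= M ->
  Rabs h12 <= M -> Rabs h13 <= M -> Rabs h23 <= M ->
  Rabs (det3 g11 g22 g33 g12 g13 g23 - det3 h11 h22 h33 h12 h13 h23) <= 18 * ((M + 1) * (M + 1)) * e.
Proof.
  intros He HM; intros.
  assert (P1 := prod3_close g11 g22 g33 h11 h22 h33 e M He HM ltac:(auto) ltac:(auto) ltac:(auto) ltac:(auto) ltac:(auto) ltac:(auto)).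
  assert (P2 := prod3_close g12 g13 g23 h12 h13 h23 e M He HM ltac:(auto) ltac:(auto) ltac:(auto) ltac:(auto) ltac:(auto) ltac:(auto)).
  assert (P3 := prod3_close g11 g23 g23 h11 h23 h23 e M He HM ltac:(auto) ltac:(auto) ltac:(auto) ltac:(auto) ltac:(auto) ltac:(auto)).
  assert (P4 := prod3_close g22 g13 g13 h22 h13 h13 e M He HM ltac:(auto) ltac:(auto) ltac:(auto) ltac:(auto) ltac:(auto) ltac:(auto)).
  assert (P5 := prod3_close g33 g12 g12 h33 h12 h12 e M He HM ltac:(auto) ltac:(auto) ltac:(auto) ltac:(auto) ltac:(auto) ltac:(auto)).
  apply Rabs_close in P1. apply Rabs_close in P2. apply Rabs_close in P3.
  apply Rabs_close in P4. apply Rabs_close in P5.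
  apply Rabs_le. unfold det3. lra.
Qed.

Definition tl (b : bool) (u : R) : R := if b then u else rg * u.
Definition tau (b : bool) : R := if b then 1 else rg + 1.

Lemma tau_bounds b : 1 <= tau b <= 2.6181.
Proof. assert (H := rg_bounds). destruct b; simpl; lra. Qed.

Lemma div_bound x k c : 0 < k -> - (c * k) <= x <= c * k -> Rabs (x / k) <= c.
Proof.
  intros Hk [H1 H2]. apply Rabs_le. split.
  - apply (Rmult_le_reg_r k); auto. unfold Rdiv. rewrite Rmult_assoc, Rinv_l by lra. lra.
  - apply (Rmult_le_reg_r k); auto. unfold Rdiv. rewrite Rmult_assoc, Rinv_l by lra. lra.
Qed.

Lemma near_sq b u dl d : 0 < u -> 0 <= dl -> dl <= u / 100000 -> near d (tl b u) dl ->
  Rabs (d * d / (u * u) - tau b) <= 1 / 20000.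
Proof.
  intros Hu Hd1 Hd2 [N1 N2]. assert (Hr := rg_bounds). assert (Hrr := rg_eq).
  replace (d * d / (u * u) - tau b) with ((d * d - tl b u * tl b u) / (u * u)).
  2:{ destruct b; unfold tl, tau; [field; lra | rewrite <- Hrr; field; lra]. }
  apply div_bound. nra.
  destruct b; unfold tl in *.
  - split; nra.
  - assert (Ht : 1.618 * u <= rg * u <= 1.6181 * u) by (split; nra).
    revert N1 N2 Ht. generalize (rg * u). intros t N1 N2 Ht. split; nra.
Qed.

Lemma four_pts (b01 b02 b03 b12 b13 b23 : bool) u dl y x1 x2 x3 :
  0 < u -> 0 <= dl -> dl <= u / 100000 ->
  near (dist y x1) (tl b01 u) dl -> near (dist y x2) (tl b02 u) dl ->
  near (dist y x3) (tl b03 u) dl -> near (dist x1 x2) (tl b12 u) dl ->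
  near (dist x1 x3) (tl b13 u) dl -> near (dist x2 x3) (tl b23 u) dl ->
  1 / 5 <= Rabs (gram (tau b01) (tau b02) (tau b03) (tau b12) (tau b13) (tau b23)) -> False.
Proof.
  intros Hu Hd1 Hd2 N01 N02 N03 N12 N13 N23 HG.
  assert (Hk : 0 < u * u) by nra.
  assert (Z := gram_zero y x1 x2 x3).
  assert (Z' : gram (D2 y x1 / (u*u)) (D2 y x2 / (u*u)) (D2 y x3 / (u*u))
                    (D2 x1 x2 / (u*u)) (D2 x1 x3 / (u*u)) (D2 x2 x3 / (u*u)) = 0).
  { rewrite gram_scale by auto. rewrite Z. unfold Rdiv. ring. }
  unfold D2 in Z'.
  apply near_sq in N01; auto. apply near_sq in N02; auto. apply near_sq in N03; auto.
  apply near_sq in N12; auto. apply near_sq in N13; auto. apply near_sq in N23; auto.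
  set (X01 := dist y x1 * dist y x1 / (u * u)) in *.
  set (X02 := dist y x2 * dist y x2 / (u * u)) in *.
  set (X03 := dist y x3 * dist y x3 / (u * u)) in *.
  set (X12 := dist x1 x2 * dist x1 x2 / (u * u)) in *.
  set (X13 := dist x1 x3 * dist x1 x3 / (u * u)) in *.
  set (X23 := dist x2 x3 * dist x2 x3 / (u * u)) in *.
  assert (T01 := tau_bounds b01). assert (T02 := tau_bounds b02). assert (T03 := tau_bounds b03).
  assert (T12 := tau_bounds b12). assert (T13 := tau_bounds b13). assert (T23 := tau_bounds b23).
  apply Rabs_close in N01. apply Rabs_close in N02. apply Rabs_close in N03.
  apply Rabs_close in N12. apply Rabs_close in N13. apply Rabs_close in N23.
  unfold gram in Z', HG.
  assert (DC := det3_close X01 X02 X03 ((X01 + X02 - X12) / 2) ((X01 + X03 - X13) / 2) ((X02 + X03 - X23) / 2)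
    (tau b01) (tau b02) (tau b03) ((tau b01 + tau b02 - tau b12) / 2) ((tau b01 + tau b03 - tau b13) / 2)
    ((tau b02 + tau b03 - tau b23) / 2) (1/10000) 3).
  rewrite Z' in DC.
  assert (DC' : Rabs (0 - det3 (tau b01) (tau b02) (tau b03) ((tau b01 + tau b02 - tau b12) / 2)
             ((tau b01 + tau b03 - tau b13) / 2) ((tau b02 + tau b03 - tau b23) / 2)) <= 18 * ((3 + 1) * (3 + 1)) * (1 / 10000)).
  { apply DC; try lra; apply Rabs_le; lra. }
  rewrite Rminus_0_l, Rabs_Ropp in DC'. lra.
Qed.

Lemma abs_ge x : 1/5 <= x \/ x <= -(1/5) -> 1/5 <= Rabs x.
Proof. unfold Rabs; destruct (Rcase_abs x); intros; lra. Qed.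

Lemma G_center (c b12 b13 b23 : bool) :
  1 / 5 <= Rabs (gram (tau c) (tau c) (tau c) (tau b12) (tau b13) (tau b23)).
Proof.
  assert (Hr := rg_bounds). assert (Hrr := rg_eq).
  apply abs_ge. left.
  destruct c, b12, b13, b23; unfold gram, det3, tau; nra.
Qed.

Lemma G_rhombus (s : bool) :
  1 / 5 <= Rabs (gram (tau s) (tau (negb s)) (tau s) (tau s) (tau (negb s)) (tau s)).
Proof.
  assert (Hr := rg_bounds). assert (Hrr := rg_eq).
  apply abs_ge.
  destruct s; unfold gram, det3, tau; simpl; [right|left]; nra.
Qed.


Fixpoint rsum (l : list R) : R := match l with [] => 0 | x :: t => x + rsum t end.

Definition Hs (g : point -> point -> point -> R) (w : point -> R) x y l :=
  rsum (map (fun z => g x y z * w z) l).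
Fixpoint Gs g w x (l : list point) : R :=
  match l with [] => 0 | y :: l' => w y * Hs g w x y l' + Gs g w x l' end.
Fixpoint Fs g w (l : list point) : R :=
  match l with [] => 0 | x :: l' => w x * Gs g w x l' + Fs g w l' end.
Definition Ws (w : point -> R) (l : list point) := rsum (map w l).

Lemma rsum_app l1 l2 : rsum (l1 ++ l2) = rsum l1 + rsum l2.
Proof. induction l1; simpl; lra. Qed.

Lemma rsum_perm l l' : Permutation l l' -> rsum l = rsum l'.
Proof. induction 1; simpl; lra. Qed.

Lemma rsum_zero {A} (f : A -> R) l : (forall z, In z l -> f z = 0) -> rsum (map f l) = 0.
Proof. induction l; simpl; intros; auto. rewrite H, IHl; auto. lra. Qed.

Lemma rsum_ext {A} (f f' : A -> R) l : (forall z, In z l -> f z = f' z) ->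
  rsum (map f l) = rsum (map f' l).
Proof. induction l; simpl; intros; auto. rewrite H, IHl; auto. Qed.

Lemma Hs_perm g w x y l l' : Permutation l l' -> Hs g w x y l = Hs g w x y l'.
Proof. intro. unfold Hs. apply rsum_perm. apply Permutation_map. auto. Qed.

Lemma Gs_perm g w x l l' : (forall x y z, g x y z = g x z y) ->
  Permutation l l' -> Gs g w x l = Gs g w x l'.
Proof.
  intros S P. induction P; simpl; auto.
  - rewrite (Hs_perm _ _ _ _ _ _ P), IHP. auto.
  - unfold Hs; simpl. rewrite (S x x0 y). ring.
  - congruence.
Qed.

Lemma Fs_perm g w l l' : (forall x y z, g x y z = g y x z) -> (forall x y z, g x y z = g x z y) ->
  Permutation l l' -> Fs g w l = Fs g w l'.
Proof.
  intros S1 S2 P. induction P; simpl; auto.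
  - rewrite (Gs_perm _ _ _ _ _ S2 P), IHP. auto.
  - assert (E : Hs g w y x l = Hs g w x y l).
    { unfold Hs. apply rsum_ext. intros. rewrite S1. auto. }
    rewrite E. ring.
  - congruence.
Qed.

Lemma Ws_perm w l l' : Permutation l l' -> Ws w l = Ws w l'.
Proof. intro. unfold Ws. apply rsum_perm. apply Permutation_map. auto. Qed.

Lemma Hs_ext g w w' x y l : (forall p, In p l -> w p = w' p) -> Hs g w x y l = Hs g w' x y l.
Proof. intro. unfold Hs. apply rsum_ext. intros. rewrite H; auto. Qed.

Lemma Gs_ext g w w' x l : (forall p, In p l -> w p = w' p) -> Gs g w x l = Gs g w' x l.
Proof.
  induction l; simpl; intros; auto.
  rewrite H, (Hs_ext g w w'), IHl; auto.
Qed.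

Lemma Fs_ext g w w' l : (forall p, In p l -> w p = w' p) -> Fs g w l = Fs g w' l.
Proof.
  induction l; simpl; intros; auto.
  rewrite H, (Gs_ext g w w'), IHl; auto.
Qed.

Lemma Ws_ext w w' l : (forall p, In p l -> w p = w' p) -> Ws w l = Ws w' l.
Proof. intro. unfold Ws. apply rsum_ext. auto. Qed.

Lemma perm_two {A} (x y : A) (Q : list A) : In x Q -> In y Q -> x <> y ->
  exists R, Permutation Q (x :: y :: R).
Proof.
  intros Hx Hy Hxy.
  destruct (in_split x Q Hx) as [l1 [l2 E]]. subst Q.
  assert (Hy' : In y (l1 ++ l2)).
  { apply in_app_or in Hy. apply in_or_app. simpl in Hy. destruct Hy as [H|[H|H]]; auto. congruence. }
  destruct (in_split y _ Hy') as [m1 [m2 E]].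
  exists (m1 ++ m2).
  eapply perm_trans. apply Permutation_sym, Permutation_middle.
  constructor. rewrite E. apply Permutation_sym, Permutation_middle.
Qed.

Definition upd (w : point -> R) (x : point) (v : R) : point -> R :=
  fun p => if excluded_middle_informative (p = x) then v else w p.

Lemma symm_bound (g : point -> point -> point -> R)
  (S1 : forall x y z, g x y z = g y x z) (S2 : forall x y z, g x y z = g x z y)
  (Final : forall Q, NoDup Q ->
     (forall x y, In x Q -> In y Q -> x <> y -> exists z, In z Q /\ g x y z <> 0) ->
     forall w, (forall p, 0 <= w p) -> Fs g w Q <= (Ws w Q) ^ 3 / 25) :
  forall Q, NoDup Q -> forall w, (forall p, 0 <= w p) -> Fs g w Q <= (Ws w Q) ^ 3 / 25.
Proof.
  intro Q. remember (length Q) as n. revert Q Heqn.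
  induction n as [n IH] using lt_wf_ind. intros Q Hn HQ w Hw.
  destruct (classic (exists x y, In x Q /\ In y Q /\ x <> y /\ forall z, In z Q -> g x y z = 0))
    as [[x [y [Hx [Hy [Hxy Hz]]]]]|Hc].
  - destruct (perm_two x y Q Hx Hy Hxy) as [R HP].
    rewrite (Fs_perm _ _ _ _ S1 S2 HP), (Ws_perm _ _ _ HP).
    assert (HN := Permutation_NoDup HP HQ).
    inversion HN as [|? ? Hx1 HN1]; subst. inversion HN1 as [|? ? Hy1 HN2]; subst.
    assert (Hx2 : ~ In x R) by (intro; apply Hx1; simpl; auto).
    assert (HR0 : Hs g w x y R = 0).
    { unfold Hs. apply rsum_zero. intros z Hz'. rewrite Hz. ring.
      apply (Permutation_in z (Permutation_sym HP)). simpl; auto. }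
    assert (Hlen : length Q = S (S (length R))) by (rewrite (Permutation_length HP); auto).
    set (w1 := upd w x (w x + w y)). set (w2 := upd w y (w x + w y)).
    assert (Hw1 : forall p, 0 <= w1 p).
    { intro p. unfold w1, upd. destruct excluded_middle_informative; auto.
      assert (h1 := Hw x). assert (h2 := Hw y). lra. }
    assert (Hw2 : forall p, 0 <= w2 p).
    { intro p. unfold w2, upd. destruct excluded_middle_informative; auto.
      assert (h1 := Hw x). assert (h2 := Hw y). lra. }
    assert (E1 : forall p, In p R -> w1 p = w p).
    { intros p Hp. unfold w1, upd. destruct excluded_middle_informative; auto. subst. contradiction. }
    assert (E2 : forall p, In p R -> w2 p = w p).
    { intros p Hp. unfold w2, upd. destruct excluded_middle_informative; auto. subst. contradiction. }
    assert (w1x : w1 x = w x + w y) by (unfold w1, upd; destruct excluded_middle_informative; congruence).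
    assert (w2y : w2 y = w x + w y) by (unfold w2, upd; destruct excluded_middle_informative; congruence).
    assert (I1 := IH (S (length R)) ltac:(lia) (x :: R) eq_refl (NoDup_cons _ Hx2 HN2) w1 Hw1).
    assert (I2 := IH (S (length R)) ltac:(lia) (y :: R) eq_refl (NoDup_cons _ Hy1 HN2) w2 Hw2).
    simpl in I1, I2. unfold Ws in I1, I2. simpl in I1, I2. fold (Ws w1 R) in I1. fold (Ws w2 R) in I2.
    rewrite (Gs_ext g w1 w), (Fs_ext g w1 w), (Ws_ext w1 w) in I1 by auto.
    rewrite (Gs_ext g w2 w), (Fs_ext g w2 w), (Ws_ext w2 w) in I2 by auto.
    rewrite w1x in I1. rewrite w2y in I2.
    simpl. rewrite HR0. unfold Ws. simpl. fold (Ws w R).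
    assert (h1 := Hw x). assert (h2 := Hw y).
    destruct (Rle_dec (Gs g w y R) (Gs g w x R)).
    + assert (0 <= w y * (Gs g w x R - Gs g w y R)) by (apply Rmult_le_pos; lra).
      replace (w x + (w y + Ws w R)) with (w x + w y + Ws w R) by ring. nra.
    + assert (0 <= w x * (Gs g w y R - Gs g w x R)) by (apply Rmult_le_pos; lra).
      replace (w x + (w y + Ws w R)) with (w x + w y + Ws w R) by ring. nra.
  - apply Final; auto.
    intros x y Hx Hy Hxy. apply NNPP. intro Hn'. apply Hc.
    exists x, y. repeat split; auto. intros z Hz.
    destruct (Req_dec (g x y z) 0); auto. exfalso. apply Hn'. exists z. auto.
Qed.


Lemma Rle_0_sqr' x : 0 <= x * x. Proof. nra. Qed.

Lemma c5_ineq w0 w1 w2 w3 w4 : 0 <= w0 -> 0 <= w1 -> 0 <= w2 -> 0 <= w3 -> 0 <= w4 ->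
  w0*w1*w2 + w1*w2*w3 + w2*w3*w4 + w3*w4*w0 + w4*w0*w1 <= (w0+w1+w2+w3+w4)^3/25.
Proof.
  intros.
  assert (h1 : 0 <= w0 * (((-1)*w0+(2)*w1+(-1)*w2+(2)*w3+(-2)*w4) * ((-1)*w0+(2)*w1+(-1)*w2+(2)*w3+(-2)*w4))) by (apply Rmult_le_pos; [auto| apply Rle_0_sqr']).
  assert (h2 : 0 <= w1 * (((-1)*w1+(2)*w2+(-1)*w3+(2)*w4+(-2)*w0) * ((-1)*w1+(2)*w2+(-1)*w3+(2)*w4+(-2)*w0))) by (apply Rmult_le_pos; [auto| apply Rle_0_sqr']).
  assert (h3 : 0 <= w2 * (((-1)*w2+(2)*w3+(-1)*w4+(2)*w0+(-2)*w1) * ((-1)*w2+(2)*w3+(-1)*w4+(2)*w0+(-2)*w1))) by (apply Rmult_le_pos; [auto| apply Rle_0_sqr']).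
  assert (h4 : 0 <= w3 * (((-1)*w3+(2)*w4+(-1)*w0+(2)*w1+(-2)*w2) * ((-1)*w3+(2)*w4+(-1)*w0+(2)*w1+(-2)*w2))) by (apply Rmult_le_pos; [auto| apply Rle_0_sqr']).
  assert (h5 : 0 <= w4 * (((-1)*w4+(2)*w0+(-1)*w1+(2)*w2+(-2)*w3) * ((-1)*w4+(2)*w0+(-1)*w1+(2)*w2+(-2)*w3))) by (apply Rmult_le_pos; [auto| apply Rle_0_sqr']).
  assert (h6 : 0 <= w0 * (((-2)*w1+(2)*w4) * ((-2)*w1+(2)*w4))) by (apply Rmult_le_pos; [auto| apply Rle_0_sqr']).
  assert (h7 : 0 <= w1 * (((-2)*w2+(2)*w0) * ((-2)*w2+(2)*w0))) by (apply Rmult_le_pos; [auto| apply Rle_0_sqr']).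
  assert (h8 : 0 <= w2 * (((-2)*w3+(2)*w1) * ((-2)*w3+(2)*w1))) by (apply Rmult_le_pos; [auto| apply Rle_0_sqr']).
  assert (h9 : 0 <= w3 * (((-2)*w4+(2)*w2) * ((-2)*w4+(2)*w2))) by (apply Rmult_le_pos; [auto| apply Rle_0_sqr']).
  assert (h10 : 0 <= w4 * (((-2)*w0+(2)*w3) * ((-2)*w0+(2)*w3))) by (apply Rmult_le_pos; [auto| apply Rle_0_sqr']).
  assert (h11 : 0 <= w0 * (((-1)*w0+(-2)*w1+(2)*w2+(-1)*w3+(2)*w4) * ((-1)*w0+(-2)*w1+(2)*w2+(-1)*w3+(2)*w4))) by (apply Rmult_le_pos; [auto| apply Rle_0_sqr']).
  assert (h12 : 0 <= w1 * (((-1)*w1+(-2)*w2+(2)*w3+(-1)*w4+(2)*w0) * ((-1)*w1+(-2)*w2+(2)*w3+(-1)*w4+(2)*w0))) by (apply Rmult_le_pos; [auto| apply Rle_0_sqr']).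
  assert (h13 : 0 <= w2 * (((-1)*w2+(-2)*w3+(2)*w4+(-1)*w0+(2)*w1) * ((-1)*w2+(-2)*w3+(2)*w4+(-1)*w0+(2)*w1))) by (apply Rmult_le_pos; [auto| apply Rle_0_sqr']).
  assert (h14 : 0 <= w3 * (((-1)*w3+(-2)*w4+(2)*w0+(-1)*w1+(2)*w2) * ((-1)*w3+(-2)*w4+(2)*w0+(-1)*w1+(2)*w2))) by (apply Rmult_le_pos; [auto| apply Rle_0_sqr']).
  assert (h15 : 0 <= w4 * (((-1)*w4+(-2)*w0+(2)*w1+(-1)*w2+(2)*w3) * ((-1)*w4+(-2)*w0+(2)*w1+(-1)*w2+(2)*w3))) by (apply Rmult_le_pos; [auto| apply Rle_0_sqr']).
  assert (h16 : 0 <= w0 * (((-1)*w0+(-1)*w1+(2)*w2+(-2)*w3+(2)*w4) * ((-1)*w0+(-1)*w1+(2)*w2+(-2)*w3+(2)*w4))) by (apply Rmult_le_pos; [auto| apply Rle_0_sqr']).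
  assert (h17 : 0 <= w1 * (((-1)*w1+(-1)*w2+(2)*w3+(-2)*w4+(2)*w0) * ((-1)*w1+(-1)*w2+(2)*w3+(-2)*w4+(2)*w0))) by (apply Rmult_le_pos; [auto| apply Rle_0_sqr']).
  assert (h18 : 0 <= w2 * (((-1)*w2+(-1)*w3+(2)*w4+(-2)*w0+(2)*w1) * ((-1)*w2+(-1)*w3+(2)*w4+(-2)*w0+(2)*w1))) by (apply Rmult_le_pos; [auto| apply Rle_0_sqr']).
  assert (h19 : 0 <= w3 * (((-1)*w3+(-1)*w4+(2)*w0+(-2)*w1+(2)*w2) * ((-1)*w3+(-1)*w4+(2)*w0+(-2)*w1+(2)*w2))) by (apply Rmult_le_pos; [auto| apply Rle_0_sqr']).
  assert (h20 : 0 <= w4 * (((-1)*w4+(-1)*w0+(2)*w1+(-2)*w2+(2)*w3) * ((-1)*w4+(-1)*w0+(2)*w1+(-2)*w2+(2)*w3))) by (apply Rmult_le_pos; [auto| apply Rle_0_sqr']).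
  assert (h21 : 0 <= w0 * (((-2)*w1+(1)*w2+(-1)*w3+(2)*w4) * ((-2)*w1+(1)*w2+(-1)*w3+(2)*w4))) by (apply Rmult_le_pos; [auto| apply Rle_0_sqr']).
  assert (h22 : 0 <= w1 * (((-2)*w2+(1)*w3+(-1)*w4+(2)*w0) * ((-2)*w2+(1)*w3+(-1)*w4+(2)*w0))) by (apply Rmult_le_pos; [auto| apply Rle_0_sqr']).
  assert (h23 : 0 <= w2 * (((-2)*w3+(1)*w4+(-1)*w0+(2)*w1) * ((-2)*w3+(1)*w4+(-1)*w0+(2)*w1))) by (apply Rmult_le_pos; [auto| apply Rle_0_sqr']).
  assert (h24 : 0 <= w3 * (((-2)*w4+(1)*w0+(-1)*w1+(2)*w2) * ((-2)*w4+(1)*w0+(-1)*w1+(2)*w2))) by (apply Rmult_le_pos; [auto| apply Rle_0_sqr']).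
  assert (h25 : 0 <= w4 * (((-2)*w0+(1)*w1+(-1)*w2+(2)*w3) * ((-2)*w0+(1)*w1+(-1)*w2+(2)*w3))) by (apply Rmult_le_pos; [auto| apply Rle_0_sqr']).
  assert (h26 : 0 <= w0 * (((-1)*w0+(2)*w1+(-2)*w2+(2)*w3+(-1)*w4) * ((-1)*w0+(2)*w1+(-2)*w2+(2)*w3+(-1)*w4))) by (apply Rmult_le_pos; [auto| apply Rle_0_sqr']).
  assert (h27 : 0 <= w1 * (((-1)*w1+(2)*w2+(-2)*w3+(2)*w4+(-1)*w0) * ((-1)*w1+(2)*w2+(-2)*w3+(2)*w4+(-1)*w0))) by (apply Rmult_le_pos; [auto| apply Rle_0_sqr']).
  assert (h28 : 0 <= w2 * (((-1)*w2+(2)*w3+(-2)*w4+(2)*w0+(-1)*w1) * ((-1)*w2+(2)*w3+(-2)*w4+(2)*w0+(-1)*w1))) by (apply Rmult_le_pos; [auto| apply Rle_0_sqr']).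
  assert (h29 : 0 <= w3 * (((-1)*w3+(2)*w4+(-2)*w0+(2)*w1+(-1)*w2) * ((-1)*w3+(2)*w4+(-2)*w0+(2)*w1+(-1)*w2))) by (apply Rmult_le_pos; [auto| apply Rle_0_sqr']).
  assert (h30 : 0 <= w4 * (((-1)*w4+(2)*w0+(-2)*w1+(2)*w2+(-1)*w3) * ((-1)*w4+(2)*w0+(-2)*w1+(2)*w2+(-1)*w3))) by (apply Rmult_le_pos; [auto| apply Rle_0_sqr']).
  lra.
Qed.

Lemma amgm3 x y z : 0 <= x -> 0 <= y -> 0 <= z -> 27 * (x * y * z) <= (x + y + z) ^ 3.
Proof.
  intros. assert (0 <= (x+y+z) * ((x-y)*(x-y) + (y-z)*(y-z) + (z-x)*(z-x))) by
    (apply Rmult_le_pos; [lra| repeat apply Rplus_le_le_0_compat; apply Rle_0_sqr']).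
  assert (0 <= x * ((y - z) * (y - z))) by (apply Rmult_le_pos; [auto|apply Rle_0_sqr']).
  assert (0 <= y * ((z - x) * (z - x))) by (apply Rmult_le_pos; [auto|apply Rle_0_sqr']).
  assert (0 <= z * ((x - y) * (x - y))) by (apply Rmult_le_pos; [auto|apply Rle_0_sqr']).
  lra.
Qed.

Definition two3 (a b c : bool) : bool := (a && b && negb c) || (a && negb b && c) || (negb a && b && c).
Definition E3 (a b c : bool) : R := if two3 a b c then 1 else 0.
Definition ne3 (a b c : bool) : bool := negb ((a && b && c) || (negb a && negb b && negb c)).
Definition two4 (a b c d : bool) : bool := ne3 a b c && ne3 a b d && ne3 a c d && ne3 b c d.
Definition norh (s1 s2 s3 s4 d1 d2 : bool) : bool := negb (s1 && s2 && s3 && s4 && negb d1 && negb d2).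

Lemma k4_ineq (c01 c02 c03 c12 c13 c23 : bool) w0 w1 w2 w3 :
  0 <= w0 -> 0 <= w1 -> 0 <= w2 -> 0 <= w3 ->
  ne3 c01 c02 c03 = true -> ne3 c01 c12 c13 = true -> ne3 c02 c12 c23 = true -> ne3 c03 c13 c23 = true ->
  norh c01 c12 c23 c03 c02 c13 = true -> norh c01 c13 c23 c02 c03 c12 = true ->
  norh c02 c12 c13 c03 c01 c23 = true ->
  E3 c01 c02 c12 * (w0*w1*w2) + E3 c01 c03 c13 * (w0*w1*w3) + E3 c02 c03 c23 * (w0*w2*w3)
  + E3 c12 c13 c23 * (w1*w2*w3) <= (w0+w1+w2+w3)^3/25.
Proof.
  intros P0 P1 P2 P3 V0 V1 V2 V3 R1 R2 R3.
  assert (A01 := amgm3 (w0) (w1) (w2 + w3) ltac:(auto) ltac:(auto) ltac:(lra)).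
  assert (A02 := amgm3 (w0) (w2) (w1 + w3) ltac:(auto) ltac:(auto) ltac:(lra)).
  assert (A03 := amgm3 (w0) (w3) (w1 + w2) ltac:(auto) ltac:(auto) ltac:(lra)).
  assert (A12 := amgm3 (w1) (w2) (w0 + w3) ltac:(auto) ltac:(auto) ltac:(lra)).
  assert (A13 := amgm3 (w1) (w3) (w0 + w2) ltac:(auto) ltac:(auto) ltac:(lra)).
  assert (A23 := amgm3 (w2) (w3) (w0 + w1) ltac:(auto) ltac:(auto) ltac:(lra)).
  assert (0 <= w0*w1*w2) by (repeat apply Rmult_le_pos; auto).
  assert (0 <= w0*w1*w3) by (repeat apply Rmult_le_pos; auto).
  assert (0 <= w0*w2*w3) by (repeat apply Rmult_le_pos; auto).
  assert (0 <= w1*w2*w3) by (repeat apply Rmult_le_pos; auto).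
  assert (0 <= (w0+w1+w2+w3)^3) by (apply pow_le; lra).
  destruct c01, c02, c03, c12, c13, c23; simpl in V0, V1, V2, V3, R1, R2, R3;
  try discriminate; unfold E3; simpl; lra.
Qed.

Lemma k5_ineq (c01 c02 c03 c04 c12 c13 c14 c23 c24 c34 : bool) w0 w1 w2 w3 w4 :
  0 <= w0 -> 0 <= w1 -> 0 <= w2 -> 0 <= w3 -> 0 <= w4 ->
  two4 c01 c02 c03 c04 = true ->
  two4 c01 c12 c13 c14 = true ->
  two4 c02 c12 c23 c24 = true ->
  two4 c03 c13 c23 c34 = true ->
  two4 c04 c14 c24 c34 = true ->
  E3 c01 c02 c12 * (w0*w1*w2) + E3 c01 c03 c13 * (w0*w1*w3) + E3 c01 c04 c14 * (w0*w1*w4) + E3 c02 c03 c23 * (w0*w2*w3) + E3 c02 c04 c24 * (w0*w2*w4) + E3 c03 c04 c34 * (w0*w3*w4) + E3 c12 c13 c23 * (w1*w2*w3) + E3 c12 c14 c24 * (w1*w2*w4) + E3 c13 c14 c34 * (w1*w3*w4) + E3 c23 c24 c34 * (w2*w3*w4) <= (w0+w1+w2+w3+w4)^3/25.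
Proof.
  intros P0 P1 P2 P3 P4 V0 V1 V2 V3 V4.
  assert (C0 := c5_ineq w0 w1 w2 w3 w4 ltac:(auto) ltac:(auto) ltac:(auto) ltac:(auto) ltac:(auto)).
  assert (C1 := c5_ineq w0 w1 w2 w4 w3 ltac:(auto) ltac:(auto) ltac:(auto) ltac:(auto) ltac:(auto)).
  assert (C2 := c5_ineq w0 w1 w3 w2 w4 ltac:(auto) ltac:(auto) ltac:(auto) ltac:(auto) ltac:(auto)).
  assert (C3 := c5_ineq w0 w1 w3 w4 w2 ltac:(auto) ltac:(auto) ltac:(auto) ltac:(auto) ltac:(auto)).
  assert (C4 := c5_ineq w0 w1 w4 w2 w3 ltac:(auto) ltac:(auto) ltac:(auto) ltac:(auto) ltac:(auto)).
  assert (C5 := c5_ineq w0 w1 w4 w3 w2 ltac:(auto) ltac:(auto) ltac:(auto) ltac:(auto) ltac:(auto)).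
  assert (C6 := c5_ineq w0 w2 w1 w3 w4 ltac:(auto) ltac:(auto) ltac:(auto) ltac:(auto) ltac:(auto)).
  assert (C7 := c5_ineq w0 w2 w1 w4 w3 ltac:(auto) ltac:(auto) ltac:(auto) ltac:(auto) ltac:(auto)).
  assert (C8 := c5_ineq w0 w2 w3 w1 w4 ltac:(auto) ltac:(auto) ltac:(auto) ltac:(auto) ltac:(auto)).
  assert (C9 := c5_ineq w0 w2 w4 w1 w3 ltac:(auto) ltac:(auto) ltac:(auto) ltac:(auto) ltac:(auto)).
  assert (C10 := c5_ineq w0 w3 w1 w2 w4 ltac:(auto) ltac:(auto) ltac:(auto) ltac:(auto) ltac:(auto)).
  assert (C11 := c5_ineq w0 w3 w2 w1 w4 ltac:(auto) ltac:(auto) ltac:(auto) ltac:(auto) ltac:(auto)).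
  assert (0 <= w0*w1*w2) by (repeat apply Rmult_le_pos; auto).
  assert (0 <= w0*w1*w3) by (repeat apply Rmult_le_pos; auto).
  assert (0 <= w0*w1*w4) by (repeat apply Rmult_le_pos; auto).
  assert (0 <= w0*w2*w3) by (repeat apply Rmult_le_pos; auto).
  assert (0 <= w0*w2*w4) by (repeat apply Rmult_le_pos; auto).
  assert (0 <= w0*w3*w4) by (repeat apply Rmult_le_pos; auto).
  assert (0 <= w1*w2*w3) by (repeat apply Rmult_le_pos; auto).
  assert (0 <= w1*w2*w4) by (repeat apply Rmult_le_pos; auto).
  assert (0 <= w1*w3*w4) by (repeat apply Rmult_le_pos; auto).
  assert (0 <= w2*w3*w4) by (repeat apply Rmult_le_pos; auto).
  destruct c01, c02, c03, c04, c12, c13, c14, c23, c24, c34; simpl in V0, V1, V2, V3, V4;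
  try discriminate; unfold E3; simpl; lra.
Qed.


Definition fb (k c : bool) : bool := if k then c else negb c.

Definition Ctx (leg base u dl : R) (k : bool) : Prop :=
  0 < u /\ 0 <= dl /\ dl <= u / 100000 /\ leg = tl (fb k true) u /\ base = tl (fb k false) u.

Lemma shape_ctx leg base u dl : shape leg base u -> 0 <= dl -> dl <= u / 100000 ->
  exists k, Ctx leg base u dl k.
Proof.
  intros [Hu [[-> ->]|[-> ->]]] H1 H2.
  - exists true. unfold Ctx, tl, fb. simpl. auto.
  - exists false. unfold Ctx, tl, fb. simpl. auto.
Qed.

Definition cS (leg dl : R) (p q : point) : bool :=
  if excluded_middle_informative (near (dist p q) leg dl) then true else false.

Definition colored (leg base dl : R) (p q : point) : Prop :=
  near (dist p q) leg dl \/ near (dist p q) base dl.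

Lemma cS_sym leg dl p q : cS leg dl p q = cS leg dl q p.
Proof. unfold cS. rewrite dist_sym. reflexivity. Qed.

Lemma colored_sym leg base dl p q : colored leg base dl p q -> colored leg base dl q p.
Proof. unfold colored. rewrite dist_sym. auto. Qed.

Lemma excl leg base u dl k d : Ctx leg base u dl k -> near d leg dl -> near d base dl -> False.
Proof.
  intros (Hu & Hd1 & Hd2 & -> & ->) [A1 A2] [B1 B2]. assert (Hr := rg_bounds).
  destruct k; unfold fb, tl in *; simpl in *; nra.
Qed.

Lemma cS_true leg dl p q : cS leg dl p q = true -> near (dist p q) leg dl.
Proof. unfold cS. destruct excluded_middle_informative; auto; discriminate. Qed.

Lemma cS_true' leg dl p q : near (dist p q) leg dl -> cS leg dl p q = true.
Proof. unfold cS. destruct excluded_middle_informative; auto; contradiction. Qed.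

Lemma cS_false' leg base u dl k p q : Ctx leg base u dl k -> near (dist p q) base dl -> cS leg dl p q = false.
Proof. intros HC H. unfold cS. destruct excluded_middle_informative; auto. exfalso. eapply excl; eauto. Qed.

Lemma col_tl leg base u dl k p q : Ctx leg base u dl k -> colored leg base dl p q ->
  near (dist p q) (tl (fb k (cS leg dl p q)) u) dl.
Proof.
  intros HC Hc. destruct HC as (Hu & Hd1 & Hd2 & Hl & Hb).
  unfold cS. destruct excluded_middle_informative as [h|h].
  - rewrite <- Hl. auto.
  - rewrite <- Hb. destruct Hc; tauto.
Qed.

Lemma center_contra leg base u dl k (HC : Ctx leg base u dl k) y x1 x2 x3 (c : bool) :
  colored leg base dl y x1 -> colored leg base dl y x2 -> colored leg base dl y x3 ->
  colored leg base dl x1 x2 -> colored leg base dl x1 x3 -> colored leg base dl x2 x3 ->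
  cS leg dl y x1 = c -> cS leg dl y x2 = c -> cS leg dl y x3 = c -> False.
Proof.
  intros C1 C2 C3 C12 C13 C23 E1 E2 E3.
  assert (N1 := col_tl _ _ _ _ _ _ _ HC C1). assert (N2 := col_tl _ _ _ _ _ _ _ HC C2).
  assert (N3 := col_tl _ _ _ _ _ _ _ HC C3). assert (N12 := col_tl _ _ _ _ _ _ _ HC C12).
  assert (N13 := col_tl _ _ _ _ _ _ _ HC C13). assert (N23 := col_tl _ _ _ _ _ _ _ HC C23).
  rewrite E1 in N1. rewrite E2 in N2. rewrite E3 in N3.
  destruct HC as (Hu & Hd1 & Hd2 & _ & _).
  exact (four_pts _ _ _ _ _ _ u dl y x1 x2 x3 Hu Hd1 Hd2 N1 N2 N3 N12 N13 N23 (G_center _ _ _ _)).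
Qed.

Lemma rhombus_contra leg base u dl k (HC : Ctx leg base u dl k) p0 p1 p2 p3 :
  colored leg base dl p0 p1 -> colored leg base dl p0 p2 -> colored leg base dl p0 p3 ->
  colored leg base dl p1 p2 -> colored leg base dl p1 p3 -> colored leg base dl p2 p3 ->
  cS leg dl p0 p1 = true -> cS leg dl p1 p2 = true -> cS leg dl p2 p3 = true ->
  cS leg dl p0 p3 = true -> cS leg dl p0 p2 = false -> cS leg dl p1 p3 = false -> False.
Proof.
  intros C1 C2 C3 C12 C13 C23 E01 E12 E23 E03 E02 E13.
  assert (N1 := col_tl _ _ _ _ _ _ _ HC C1). assert (N2 := col_tl _ _ _ _ _ _ _ HC C2).
  assert (N3 := col_tl _ _ _ _ _ _ _ HC C3). assert (N12 := col_tl _ _ _ _ _ _ _ HC C12).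
  assert (N13 := col_tl _ _ _ _ _ _ _ HC C13). assert (N23 := col_tl _ _ _ _ _ _ _ HC C23).
  rewrite E01 in N1. rewrite E02 in N2. rewrite E03 in N3. rewrite E12 in N12.
  rewrite E13 in N13. rewrite E23 in N23.
  destruct HC as (Hu & Hd1 & Hd2 & _ & _).
  assert (Hn : fb k false = negb (fb k true)) by (destruct k; reflexivity).
  rewrite Hn in N2, N13.
  exact (four_pts _ _ _ _ _ _ u dl p0 p1 p2 p3 Hu Hd1 Hd2 N1 N2 N3 N12 N13 N23 (G_rhombus _)).
Qed.

Lemma vertex3 leg base u dl k (HC : Ctx leg base u dl k) y x1 x2 x3 :
  colored leg base dl y x1 -> colored leg base dl y x2 -> colored leg base dl y x3 ->
  colored leg base dl x1 x2 -> colored leg base dl x1 x3 -> colored leg base dl x2 x3 ->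
  ne3 (cS leg dl y x1) (cS leg dl y x2) (cS leg dl y x3) = true.
Proof.
  intros. unfold ne3.
  destruct (cS leg dl y x1) eqn:E1, (cS leg dl y x2) eqn:E2, (cS leg dl y x3) eqn:E3;
  simpl; auto; exfalso; eapply (center_contra _ _ _ _ _ HC y x1 x2 x3); eauto.
Qed.

Lemma vertex4 leg base u dl k (HC : Ctx leg base u dl k) y x1 x2 x3 x4 :
  colored leg base dl y x1 -> colored leg base dl y x2 -> colored leg base dl y x3 ->
  colored leg base dl y x4 ->
  colored leg base dl x1 x2 -> colored leg base dl x1 x3 -> colored leg base dl x1 x4 ->
  colored leg base dl x2 x3 -> colored leg base dl x2 x4 -> colored leg base dl x3 x4 ->
  two4 (cS leg dl y x1) (cS leg dl y x2) (cS leg dl y x3) (cS leg dl y x4) = true.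
Proof.
  intros. unfold two4.
  rewrite (vertex3 _ _ _ _ _ HC y x1 x2 x3), (vertex3 _ _ _ _ _ HC y x1 x2 x4),
    (vertex3 _ _ _ _ _ HC y x1 x3 x4), (vertex3 _ _ _ _ _ HC y x2 x3 x4); auto.
Qed.

Lemma rh_bool leg base u dl k (HC : Ctx leg base u dl k) p0 p1 p2 p3 :
  colored leg base dl p0 p1 -> colored leg base dl p0 p2 -> colored leg base dl p0 p3 ->
  colored leg base dl p1 p2 -> colored leg base dl p1 p3 -> colored leg base dl p2 p3 ->
  norh (cS leg dl p0 p1) (cS leg dl p1 p2) (cS leg dl p2 p3) (cS leg dl p0 p3)
       (cS leg dl p0 p2) (cS leg dl p1 p3) = true.
Proof.
  intros. unfold norh.
  destruct (cS leg dl p0 p1) eqn:E1, (cS leg dl p1 p2) eqn:E2, (cS leg dl p2 p3) eqn:E3,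
    (cS leg dl p0 p3) eqn:E4, (cS leg dl p0 p2) eqn:E5, (cS leg dl p1 p3) eqn:E6;
  simpl; auto; exfalso; eapply (rhombus_contra _ _ _ _ _ HC p0 p1 p2 p3); eauto.
Qed.

Definition gv (leg base dl : R) (p q r : point) : R :=
  if excluded_middle_informative (aSSL leg base dl p q r) then 1 else 0.

Lemma gv_nonneg leg base dl p q r : 0 <= gv leg base dl p q r.
Proof. unfold gv. destruct excluded_middle_informative; lra. Qed.

Lemma gv_le1 leg base dl p q r : gv leg base dl p q r <= 1.
Proof. unfold gv. destruct excluded_middle_informative; lra. Qed.

Lemma gv_sym1 leg base dl p q r : gv leg base dl p q r = gv leg base dl q p r.
Proof.
  unfold gv. destruct excluded_middle_informative as [h|h], excluded_middle_informative as [h'|h'];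
  auto; exfalso; rewrite aSSL_swap12 in h; tauto.
Qed.

Lemma gv_sym2 leg base dl p q r : gv leg base dl p q r = gv leg base dl p r q.
Proof.
  unfold gv. destruct excluded_middle_informative as [h|h], excluded_middle_informative as [h'|h'];
  auto; exfalso; rewrite aSSL_swap23 in h; tauto.
Qed.

Lemma gv_col leg base dl p q r : gv leg base dl p q r <> 0 -> colored leg base dl p q.
Proof.
  unfold gv, colored. destruct excluded_middle_informative as [h|h]; [|lra].
  intros _. unfold aSSL in h. rewrite (dist_sym q p) in h. tauto.
Qed.

Lemma E3_nonneg a b c : 0 <= E3 a b c.
Proof. unfold E3. destruct two3; lra. Qed.

Lemma gv_le leg base u dl k (HC : Ctx leg base u dl k) p q r :
  gv leg base dl p q r <= E3 (cS leg dl p q) (cS leg dl p r) (cS leg dl q r).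
Proof.
  unfold gv. destruct excluded_middle_informative as [h|h]; [|apply E3_nonneg].
  unfold aSSL in h. rewrite (dist_sym q p), (dist_sym r p), (dist_sym r q) in h.
  destruct h as [(A1 & A2 & A3)|[(A1 & A2 & A3)|(A1 & A2 & A3)]].
  - rewrite (cS_true' _ _ _ _ A1), (cS_true' _ _ _ _ A2), (cS_false' _ _ _ _ _ _ _ HC A3).
    unfold E3; simpl; lra.
  - rewrite (cS_true' _ _ _ _ A1), (cS_true' _ _ _ _ A2), (cS_false' _ _ _ _ _ _ _ HC A3).
    unfold E3; simpl; lra.
  - rewrite (cS_false' _ _ _ _ _ _ _ HC A3), (cS_true' _ _ _ _ A1), (cS_true' _ _ _ _ A2).
    unfold E3; simpl; lra.
Qed.


Ltac unpack_nodup H := repeat match type of H with NoDup (_ :: _) =>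
  let Hn := fresh "Hn" in apply NoDup_cons_iff in H; destruct H as [Hn H]; simpl in Hn end.
Ltac neq := let E := fresh in intro E; subst;
  match goal with Hn : ~ _ |- _ => solve [apply Hn; simpl; auto 10] end.

Lemma Ws_nonneg w l : (forall p, 0 <= w p) -> 0 <= Ws w l.
Proof. intro H. unfold Ws. induction l; simpl; auto. lra. assert (h := H a). lra. Qed.

Lemma final_bound leg base u dl k (HC : Ctx leg base u dl k) Q : NoDup Q ->
  (forall x y, In x Q -> In y Q -> x <> y -> exists z, In z Q /\ gv leg base dl x y z <> 0) ->
  forall w, (forall p, 0 <= w p) -> Fs (gv leg base dl) w Q <= (Ws w Q) ^ 3 / 25.
Proof.
  intros HN Hcov w Hw.
  assert (Hcol : forall x y, In x Q -> In y Q -> x <> y -> colored leg base dl x y).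
  { intros x y Hx Hy Hxy. destruct (Hcov x y Hx Hy Hxy) as [z [_ Hz]]. eapply gv_col; eauto. }
  clear Hcov.
  assert (HW : 0 <= Ws w Q) by (apply Ws_nonneg; auto).
  assert (HW3 : 0 <= (Ws w Q) ^ 3 / 25) by (apply Rmult_le_pos; [apply pow_le; auto| lra]).
  destruct Q as [|p0 [|p1 [|p2 [|p3 [|p4 [|p5 rest]]]]]].
  - simpl. auto.
  - simpl. unfold Hs. simpl. lra.
  - simpl. unfold Hs. simpl. lra.
  - unpack_nodup HN.

    assert (Feq : Fs (gv leg base dl) w [p0; p1; p2] = gv leg base dl p0 p1 p2 * (w p0 * w p1 * w p2)) by (simpl; unfold Hs; simpl; ring).
    rewrite Feq.
    assert (Weq : Ws w [p0; p1; p2] = w p0 + w p1 + w p2) by (unfold Ws; simpl; ring).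
    rewrite Weq.
    assert (h0 := Hw p0). assert (h1 := Hw p1). assert (h2 := Hw p2).
    assert (G1 := gv_le1 leg base dl p0 p1 p2). assert (G0 := gv_nonneg leg base dl p0 p1 p2).
    assert (M : 0 <= w p0 * w p1 * w p2) by (repeat apply Rmult_le_pos; auto).
    assert (A := amgm3 (w p0) (w p1) (w p2) h0 h1 h2).
    assert (gv leg base dl p0 p1 p2 * (w p0 * w p1 * w p2) <= w p0 * w p1 * w p2) by nra.
    assert (0 <= (w p0 + w p1 + w p2) ^ 3) by (apply pow_le; lra).
    lra.
  - unpack_nodup HN.

    assert (C0_1 : colored leg base dl p0 p1) by (apply Hcol; [simpl; auto 10 | simpl; auto 10 | neq]).
    assert (C0_2 : colored leg base dl p0 p2) by (apply Hcol; [simpl; auto 10 | simpl; auto 10 | neq]).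
    assert (C0_3 : colored leg base dl p0 p3) by (apply Hcol; [simpl; auto 10 | simpl; auto 10 | neq]).
    assert (C1_0 : colored leg base dl p1 p0) by (apply Hcol; [simpl; auto 10 | simpl; auto 10 | neq]).
    assert (C1_2 : colored leg base dl p1 p2) by (apply Hcol; [simpl; auto 10 | simpl; auto 10 | neq]).
    assert (C1_3 : colored leg base dl p1 p3) by (apply Hcol; [simpl; auto 10 | simpl; auto 10 | neq]).
    assert (C2_0 : colored leg base dl p2 p0) by (apply Hcol; [simpl; auto 10 | simpl; auto 10 | neq]).
    assert (C2_1 : colored leg base dl p2 p1) by (apply Hcol; [simpl; auto 10 | simpl; auto 10 | neq]).
    assert (C2_3 : colored leg base dl p2 p3) by (apply Hcol; [simpl; auto 10 | simpl; auto 10 | neq]).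
    assert (C3_0 : colored leg base dl p3 p0) by (apply Hcol; [simpl; auto 10 | simpl; auto 10 | neq]).
    assert (C3_1 : colored leg base dl p3 p1) by (apply Hcol; [simpl; auto 10 | simpl; auto 10 | neq]).
    assert (C3_2 : colored leg base dl p3 p2) by (apply Hcol; [simpl; auto 10 | simpl; auto 10 | neq]).
    assert (Feq : Fs (gv leg base dl) w [p0; p1; p2; p3] = gv leg base dl p0 p1 p2 * (w p0 * w p1 * w p2) + gv leg base dl p0 p1 p3 * (w p0 * w p1 * w p3) + gv leg base dl p0 p2 p3 * (w p0 * w p2 * w p3) + gv leg base dl p1 p2 p3 * (w p1 * w p2 * w p3)) by (simpl; unfold Hs; simpl; ring).
    rewrite Feq.
    assert (Weq : Ws w [p0; p1; p2; p3] = w p0 + w p1 + w p2 + w p3) by (unfold Ws; simpl; ring).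
    rewrite Weq.
    assert (L012 : gv leg base dl p0 p1 p2 * (w p0 * w p1 * w p2) <= E3 (cS leg dl p0 p1) (cS leg dl p0 p2) (cS leg dl p1 p2) * (w p0 * w p1 * w p2)) by (apply Rmult_le_compat_r; [repeat apply Rmult_le_pos; auto | apply (gv_le _ _ _ _ _ HC)]).
    assert (L013 : gv leg base dl p0 p1 p3 * (w p0 * w p1 * w p3) <= E3 (cS leg dl p0 p1) (cS leg dl p0 p3) (cS leg dl p1 p3) * (w p0 * w p1 * w p3)) by (apply Rmult_le_compat_r; [repeat apply Rmult_le_pos; auto | apply (gv_le _ _ _ _ _ HC)]).
    assert (L023 : gv leg base dl p0 p2 p3 * (w p0 * w p2 * w p3) <= E3 (cS leg dl p0 p2) (cS leg dl p0 p3) (cS leg dl p2 p3) * (w p0 * w p2 * w p3)) by (apply Rmult_le_compat_r; [repeat apply Rmult_le_pos; auto | apply (gv_le _ _ _ _ _ HC)]).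
    assert (L123 : gv leg base dl p1 p2 p3 * (w p1 * w p2 * w p3) <= E3 (cS leg dl p1 p2) (cS leg dl p1 p3) (cS leg dl p2 p3) * (w p1 * w p2 * w p3)) by (apply Rmult_le_compat_r; [repeat apply Rmult_le_pos; auto | apply (gv_le _ _ _ _ _ HC)]).
    assert (h0 := Hw p0). assert (h1 := Hw p1). assert (h2 := Hw p2). assert (h3 := Hw p3).
    assert (V0 := vertex3 _ _ _ _ _ HC p0 p1 p2 p3 C0_1 C0_2 C0_3 C1_2 C1_3 C2_3).
    assert (V1 := vertex3 _ _ _ _ _ HC p1 p0 p2 p3 C1_0 C1_2 C1_3 C0_2 C0_3 C2_3).
    assert (V2 := vertex3 _ _ _ _ _ HC p2 p0 p1 p3 C2_0 C2_1 C2_3 C0_1 C0_3 C1_3).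
    assert (V3 := vertex3 _ _ _ _ _ HC p3 p0 p1 p2 C3_0 C3_1 C3_2 C0_1 C0_2 C1_2).
    assert (R1 := rh_bool _ _ _ _ _ HC p0 p1 p2 p3 C0_1 C0_2 C0_3 C1_2 C1_3 C2_3).
    assert (R2 := rh_bool _ _ _ _ _ HC p0 p1 p3 p2 C0_1 C0_3 C0_2 C1_3 C1_2 C3_2).
    assert (R3 := rh_bool _ _ _ _ _ HC p0 p2 p1 p3 C0_2 C0_1 C0_3 C2_1 C2_3 C1_3).
    rewrite ?(cS_sym leg dl p1 p0), ?(cS_sym leg dl p2 p0), ?(cS_sym leg dl p2 p1),
      ?(cS_sym leg dl p3 p0), ?(cS_sym leg dl p3 p1), ?(cS_sym leg dl p3 p2) in *.
    assert (K := k4_ineq _ _ _ _ _ _ _ _ _ _ h0 h1 h2 h3 V0 V1 V2 V3 R1 R2 R3).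
    lra.
  - unpack_nodup HN.

    assert (C0_1 : colored leg base dl p0 p1) by (apply Hcol; [simpl; auto 10 | simpl; auto 10 | neq]).
    assert (C0_2 : colored leg base dl p0 p2) by (apply Hcol; [simpl; auto 10 | simpl; auto 10 | neq]).
    assert (C0_3 : colored leg base dl p0 p3) by (apply Hcol; [simpl; auto 10 | simpl; auto 10 | neq]).
    assert (C0_4 : colored leg base dl p0 p4) by (apply Hcol; [simpl; auto 10 | simpl; auto 10 | neq]).
    assert (C1_0 : colored leg base dl p1 p0) by (apply Hcol; [simpl; auto 10 | simpl; auto 10 | neq]).
    assert (C1_2 : colored leg base dl p1 p2) by (apply Hcol; [simpl; auto 10 | simpl; auto 10 | neq]).
    assert (C1_3 : colored leg base dl p1 p3) by (apply Hcol; [simpl; auto 10 | simpl; auto 10 | neq]).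
    assert (C1_4 : colored leg base dl p1 p4) by (apply Hcol; [simpl; auto 10 | simpl; auto 10 | neq]).
    assert (C2_0 : colored leg base dl p2 p0) by (apply Hcol; [simpl; auto 10 | simpl; auto 10 | neq]).
    assert (C2_1 : colored leg base dl p2 p1) by (apply Hcol; [simpl; auto 10 | simpl; auto 10 | neq]).
    assert (C2_3 : colored leg base dl p2 p3) by (apply Hcol; [simpl; auto 10 | simpl; auto 10 | neq]).
    assert (C2_4 : colored leg base dl p2 p4) by (apply Hcol; [simpl; auto 10 | simpl; auto 10 | neq]).
    assert (C3_0 : colored leg base dl p3 p0) by (apply Hcol; [simpl; auto 10 | simpl; auto 10 | neq]).
    assert (C3_1 : colored leg base dl p3 p1) by (apply Hcol; [simpl; auto 10 | simpl; auto 10 | neq]).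
    assert (C3_2 : colored leg base dl p3 p2) by (apply Hcol; [simpl; auto 10 | simpl; auto 10 | neq]).
    assert (C3_4 : colored leg base dl p3 p4) by (apply Hcol; [simpl; auto 10 | simpl; auto 10 | neq]).
    assert (C4_0 : colored leg base dl p4 p0) by (apply Hcol; [simpl; auto 10 | simpl; auto 10 | neq]).
    assert (C4_1 : colored leg base dl p4 p1) by (apply Hcol; [simpl; auto 10 | simpl; auto 10 | neq]).
    assert (C4_2 : colored leg base dl p4 p2) by (apply Hcol; [simpl; auto 10 | simpl; auto 10 | neq]).
    assert (C4_3 : colored leg base dl p4 p3) by (apply Hcol; [simpl; auto 10 | simpl; auto 10 | neq]).
    assert (Feq : Fs (gv leg base dl) w [p0; p1; p2; p3; p4] = gv leg base dl p0 p1 p2 * (w p0 * w p1 * w p2) + gv leg base dl p0 p1 p3 * (w p0 * w p1 * w p3) + gv leg base dl p0 p1 p4 * (w p0 * w p1 * w p4) + gv leg base dl p0 p2 p3 * (w p0 * w p2 * w p3) + gv leg base dl p0 p2 p4 * (w p0 * w p2 * w p4) + gv leg base dl p0 p3 p4 * (w p0 * w p3 * w p4) + gv leg base dl p1 p2 p3 * (w p1 * w p2 * w p3) + gv leg base dl p1 p2 p4 * (w p1 * w p2 * w p4) + gv leg base dl p1 p3 p4 * (w p1 * w p3 * w p4) + gv leg base dl p2 p3 p4 * (w p2 * w p3 * w p4)) by (simpl; unfold Hs; simpl; ring).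
    rewrite Feq.
    assert (Weq : Ws w [p0; p1; p2; p3; p4] = w p0 + w p1 + w p2 + w p3 + w p4) by (unfold Ws; simpl; ring).
    rewrite Weq.
    assert (L012 : gv leg base dl p0 p1 p2 * (w p0 * w p1 * w p2) <= E3 (cS leg dl p0 p1) (cS leg dl p0 p2) (cS leg dl p1 p2) * (w p0 * w p1 * w p2)) by (apply Rmult_le_compat_r; [repeat apply Rmult_le_pos; auto | apply (gv_le _ _ _ _ _ HC)]).
    assert (L013 : gv leg base dl p0 p1 p3 * (w p0 * w p1 * w p3) <= E3 (cS leg dl p0 p1) (cS leg dl p0 p3) (cS leg dl p1 p3) * (w p0 * w p1 * w p3)) by (apply Rmult_le_compat_r; [repeat apply Rmult_le_pos; auto | apply (gv_le _ _ _ _ _ HC)]).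
    assert (L014 : gv leg base dl p0 p1 p4 * (w p0 * w p1 * w p4) <= E3 (cS leg dl p0 p1) (cS leg dl p0 p4) (cS leg dl p1 p4) * (w p0 * w p1 * w p4)) by (apply Rmult_le_compat_r; [repeat apply Rmult_le_pos; auto | apply (gv_le _ _ _ _ _ HC)]).
    assert (L023 : gv leg base dl p0 p2 p3 * (w p0 * w p2 * w p3) <= E3 (cS leg dl p0 p2) (cS leg dl p0 p3) (cS leg dl p2 p3) * (w p0 * w p2 * w p3)) by (apply Rmult_le_compat_r; [repeat apply Rmult_le_pos; auto | apply (gv_le _ _ _ _ _ HC)]).
    assert (L024 : gv leg base dl p0 p2 p4 * (w p0 * w p2 * w p4) <= E3 (cS leg dl p0 p2) (cS leg dl p0 p4) (cS leg dl p2 p4) * (w p0 * w p2 * w p4)) by (apply Rmult_le_compat_r; [repeat apply Rmult_le_pos; auto | apply (gv_le _ _ _ _ _ HC)]).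
    assert (L034 : gv leg base dl p0 p3 p4 * (w p0 * w p3 * w p4) <= E3 (cS leg dl p0 p3) (cS leg dl p0 p4) (cS leg dl p3 p4) * (w p0 * w p3 * w p4)) by (apply Rmult_le_compat_r; [repeat apply Rmult_le_pos; auto | apply (gv_le _ _ _ _ _ HC)]).
    assert (L123 : gv leg base dl p1 p2 p3 * (w p1 * w p2 * w p3) <= E3 (cS leg dl p1 p2) (cS leg dl p1 p3) (cS leg dl p2 p3) * (w p1 * w p2 * w p3)) by (apply Rmult_le_compat_r; [repeat apply Rmult_le_pos; auto | apply (gv_le _ _ _ _ _ HC)]).
    assert (L124 : gv leg base dl p1 p2 p4 * (w p1 * w p2 * w p4) <= E3 (cS leg dl p1 p2) (cS leg dl p1 p4) (cS leg dl p2 p4) * (w p1 * w p2 * w p4)) by (apply Rmult_le_compat_r; [repeat apply Rmult_le_pos; auto | apply (gv_le _ _ _ _ _ HC)]).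
    assert (L134 : gv leg base dl p1 p3 p4 * (w p1 * w p3 * w p4) <= E3 (cS leg dl p1 p3) (cS leg dl p1 p4) (cS leg dl p3 p4) * (w p1 * w p3 * w p4)) by (apply Rmult_le_compat_r; [repeat apply Rmult_le_pos; auto | apply (gv_le _ _ _ _ _ HC)]).
    assert (L234 : gv leg base dl p2 p3 p4 * (w p2 * w p3 * w p4) <= E3 (cS leg dl p2 p3) (cS leg dl p2 p4) (cS leg dl p3 p4) * (w p2 * w p3 * w p4)) by (apply Rmult_le_compat_r; [repeat apply Rmult_le_pos; auto | apply (gv_le _ _ _ _ _ HC)]).
    assert (h0 := Hw p0). assert (h1 := Hw p1). assert (h2 := Hw p2). assert (h3 := Hw p3). assert (h4 := Hw p4).
    assert (V0 := vertex4 _ _ _ _ _ HC p0 p1 p2 p3 p4 C0_1 C0_2 C0_3 C0_4 C1_2 C1_3 C1_4 C2_3 C2_4 C3_4).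
    assert (V1 := vertex4 _ _ _ _ _ HC p1 p0 p2 p3 p4 C1_0 C1_2 C1_3 C1_4 C0_2 C0_3 C0_4 C2_3 C2_4 C3_4).
    assert (V2 := vertex4 _ _ _ _ _ HC p2 p0 p1 p3 p4 C2_0 C2_1 C2_3 C2_4 C0_1 C0_3 C0_4 C1_3 C1_4 C3_4).
    assert (V3 := vertex4 _ _ _ _ _ HC p3 p0 p1 p2 p4 C3_0 C3_1 C3_2 C3_4 C0_1 C0_2 C0_4 C1_2 C1_4 C2_4).
    assert (V4 := vertex4 _ _ _ _ _ HC p4 p0 p1 p2 p3 C4_0 C4_1 C4_2 C4_3 C0_1 C0_2 C0_3 C1_2 C1_3 C2_3).
    rewrite ?(cS_sym leg dl p1 p0), ?(cS_sym leg dl p2 p0), ?(cS_sym leg dl p3 p0), ?(cS_sym leg dl p4 p0), ?(cS_sym leg dl p2 p1), ?(cS_sym leg dl p3 p1), ?(cS_sym leg dl p4 p1), ?(cS_sym leg dl p3 p2), ?(cS_sym leg dl p4 p2), ?(cS_sym leg dl p4 p3) in *.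
    assert (K := k5_ineq _ _ _ _ _ _ _ _ _ _ _ _ _ _ _ h0 h1 h2 h3 h4 V0 V1 V2 V3 V4).
    lra.
  - exfalso. unpack_nodup HN.

    assert (C0_1 : colored leg base dl p0 p1) by (apply Hcol; [simpl; auto 10 | simpl; auto 10 | neq]).
    assert (C0_2 : colored leg base dl p0 p2) by (apply Hcol; [simpl; auto 10 | simpl; auto 10 | neq]).
    assert (C0_3 : colored leg base dl p0 p3) by (apply Hcol; [simpl; auto 10 | simpl; auto 10 | neq]).
    assert (C0_4 : colored leg base dl p0 p4) by (apply Hcol; [simpl; auto 10 | simpl; auto 10 | neq]).
    assert (C0_5 : colored leg base dl p0 p5) by (apply Hcol; [simpl; auto 10 | simpl; auto 10 | neq]).
    assert (C1_0 : colored leg base dl p1 p0) by (apply Hcol; [simpl; auto 10 | simpl; auto 10 | neq]).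
    assert (C1_2 : colored leg base dl p1 p2) by (apply Hcol; [simpl; auto 10 | simpl; auto 10 | neq]).
    assert (C1_3 : colored leg base dl p1 p3) by (apply Hcol; [simpl; auto 10 | simpl; auto 10 | neq]).
    assert (C1_4 : colored leg base dl p1 p4) by (apply Hcol; [simpl; auto 10 | simpl; auto 10 | neq]).
    assert (C1_5 : colored leg base dl p1 p5) by (apply Hcol; [simpl; auto 10 | simpl; auto 10 | neq]).
    assert (C2_0 : colored leg base dl p2 p0) by (apply Hcol; [simpl; auto 10 | simpl; auto 10 | neq]).
    assert (C2_1 : colored leg base dl p2 p1) by (apply Hcol; [simpl; auto 10 | simpl; auto 10 | neq]).
    assert (C2_3 : colored leg base dl p2 p3) by (apply Hcol; [simpl; auto 10 | simpl; auto 10 | neq]).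
    assert (C2_4 : colored leg base dl p2 p4) by (apply Hcol; [simpl; auto 10 | simpl; auto 10 | neq]).
    assert (C2_5 : colored leg base dl p2 p5) by (apply Hcol; [simpl; auto 10 | simpl; auto 10 | neq]).
    assert (C3_0 : colored leg base dl p3 p0) by (apply Hcol; [simpl; auto 10 | simpl; auto 10 | neq]).
    assert (C3_1 : colored leg base dl p3 p1) by (apply Hcol; [simpl; auto 10 | simpl; auto 10 | neq]).
    assert (C3_2 : colored leg base dl p3 p2) by (apply Hcol; [simpl; auto 10 | simpl; auto 10 | neq]).
    assert (C3_4 : colored leg base dl p3 p4) by (apply Hcol; [simpl; auto 10 | simpl; auto 10 | neq]).
    assert (C3_5 : colored leg base dl p3 p5) by (apply Hcol; [simpl; auto 10 | simpl; auto 10 | neq]).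
    assert (C4_0 : colored leg base dl p4 p0) by (apply Hcol; [simpl; auto 10 | simpl; auto 10 | neq]).
    assert (C4_1 : colored leg base dl p4 p1) by (apply Hcol; [simpl; auto 10 | simpl; auto 10 | neq]).
    assert (C4_2 : colored leg base dl p4 p2) by (apply Hcol; [simpl; auto 10 | simpl; auto 10 | neq]).
    assert (C4_3 : colored leg base dl p4 p3) by (apply Hcol; [simpl; auto 10 | simpl; auto 10 | neq]).
    assert (C4_5 : colored leg base dl p4 p5) by (apply Hcol; [simpl; auto 10 | simpl; auto 10 | neq]).
    assert (C5_0 : colored leg base dl p5 p0) by (apply Hcol; [simpl; auto 10 | simpl; auto 10 | neq]).
    assert (C5_1 : colored leg base dl p5 p1) by (apply Hcol; [simpl; auto 10 | simpl; auto 10 | neq]).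
    assert (C5_2 : colored leg base dl p5 p2) by (apply Hcol; [simpl; auto 10 | simpl; auto 10 | neq]).
    assert (C5_3 : colored leg base dl p5 p3) by (apply Hcol; [simpl; auto 10 | simpl; auto 10 | neq]).
    assert (C5_4 : colored leg base dl p5 p4) by (apply Hcol; [simpl; auto 10 | simpl; auto 10 | neq]).
    destruct (cS leg dl p0 p1) eqn:E1, (cS leg dl p0 p2) eqn:E2, (cS leg dl p0 p3) eqn:E3,
      (cS leg dl p0 p4) eqn:E4, (cS leg dl p0 p5) eqn:E5.
    all: first [ solve [eapply (center_contra _ _ _ _ _ HC p0 p1 p2 p3); eassumption] | solve [eapply (center_contra _ _ _ _ _ HC p0 p1 p2 p4); eassumption] | solve [eapply (center_contra _ _ _ _ _ HC p0 p1 p2 p5); eassumption] | solve [eapply (center_contra _ _ _ _ _ HC p0 p1 p3 p4); eassumption] | solve [eapply (center_contra _ _ _ _ _ HC p0 p1 p3 p5); eassumption] | solve [eapply (center_contra _ _ _ _ _ HC p0 p1 p4 p5); eassumption] | solve [eapply (center_contra _ _ _ _ _ HC p0 p2 p3 p4); eassumption] | solve [eapply (center_contra _ _ _ _ _ HC p0 p2 p3 p5); eassumption] | solve [eapply (center_contra _ _ _ _ _ HC p0 p2 p4 p5); eassumption] | solve [eapply (center_contra _ _ _ _ _ HC p0 p3 p4 p5); eassumption] ].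
Qed.


Lemma rsum_scale {A} (c : R) (f : A -> R) l : rsum (map (fun z => c * f z) l) = c * rsum (map f l).
Proof. induction l; simpl; [ring|]. rewrite IHl. ring. Qed.

Lemma pairs_sum g w x t :
  rsum (map (fun yz => w x * (w (fst yz) * (g x (fst yz) (snd yz) * w (snd yz)))) (pairs_of t))
  = w x * Gs g w x t.
Proof.
  induction t as [|a t IH]; simpl; [ring|].
  rewrite map_app, rsum_app, map_map, IH. simpl.
  rewrite (rsum_scale (w x) (fun z => w a * (g x a z * w z))).
  rewrite (rsum_scale (w a) (fun z => g x a z * w z)). unfold Hs. ring.
Qed.

Lemma Fs_triples g w l :
  Fs g w l = rsum (map (fun t => let '(p, q, r) := t in w p * (w q * (g p q r * w r))) (triples_of l)).
Proof.
  induction l as [|x t IH]; simpl; auto.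
  rewrite map_app, rsum_app, map_map, <- IH. simpl.
  rewrite pairs_sum. reflexivity.
Qed.

Lemma filter_count {A} (pb : A -> bool) (tf : A -> R) l :
  (forall t, 0 <= tf t) -> (forall t, pb t = true -> 1 <= tf t) ->
  INR (length (filter pb l)) <= rsum (map tf l).
Proof.
  intros H0 H1. induction l as [|a l IH]; simpl; [lra|].
  destruct (pb a) eqn:E.
  - simpl length. rewrite S_INR. assert (h := H1 a E). lra.
  - assert (h := H0 a). lra.
Qed.

Lemma Ws_ones l : Ws (fun _ => 1) l = INR (length l).
Proof. unfold Ws. induction l; simpl; auto. rewrite IHl. destruct (length l); simpl; lra. Qed.

Theorem lemma3p6 (T : point * point * point) :
  (tri_type T 108 36 36 \/ tri_type T 72 72 36) ->
  forall n : nat, (0 < n)%nat -> h_le n T (INR n ^ 3 / 25).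
Proof.
  intros HT n Hn.
  destruct (T_shape T HT) as [leg [base [u [Hsh [Hm HS]]]]].
  assert (Hu : 0 < u) by (destruct Hsh; auto).
  set (eps := 1 / 1000000).
  set (dl := 2 * (eps * u)).
  destruct (shape_ctx leg base u dl Hsh) as [k HC].
  { unfold dl, eps. lra. }
  { unfold dl, eps. lra. }
  exists eps. split; [unfold eps; lra|].
  intros P HP Hlen.
  assert (Hb := symm_bound (gv leg base dl) (gv_sym1 leg base dl) (gv_sym2 leg base dl)
    (final_bound leg base u dl k HC) P HP (fun _ => 1) (fun _ => Rle_0_1)).
  rewrite Ws_ones, Hlen in Hb.
  eapply Rle_trans; [|exact Hb].
  rewrite Fs_triples. unfold count_good.
  apply filter_count.
  - intros [[p q] r]. assert (h := gv_nonneg leg base dl p q r). lra.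
  - intros [[p q] r] E. unfold Pdec in E.
    destruct excluded_middle_informative as [G|G]; [|discriminate].
    assert (A := good3_aSSL eps T leg base u p q r Hsh Hm HS G).
    unfold gv. destruct excluded_middle_informative; [lra|]. contradiction.
Qed.
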